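(* Let $X$ be a uniform space equipped with a uniformly continuous and expansive action of a group $\Gamma$, and let $f \colon X \to X$ be a uniformly continuous and $\Gamma$-equivariant map. Let $Y$ be a subset of $X$ such that $Y$ and $f(Y)$ are both closed in $X$ and the restriction of $f$ to $Y$ is a uniform embedding. Suppose that there exists a net $(Z_i)_{i \in I}$ of $\Gamma$-invariant subsets of $X$ such that, for all $i \in I$, $f(Z_i) \subset Z_i$ and the restriction map $f\vert_{Z_i} \colon Z_i \to Z_i$ is surjunctive, and such that $(Z_i)$ converges to $Y$ in the Hausdorff-Bourbaki topology. Then $Y$ is $\Gamma$-invariant and $f(Y) = Y$.
   Context: A map $g \colon S \to S$ is surjunctive if it is surjective or not injective. For $V \subset X \times X$ and $A \subset X$, $V[A] = \{x \in X : (x,a) \in V \text{ for some } a \in A\}$. An action of $\Gamma$ on $X$ is uniformly continuous if each map $x \mapsto \gamma x$ is uniformly continuous; it is expansive if there is an entourage $W_0$ of $X$ such that for any two distinct $x,y \in X$ there is $\gamma \in \Gamma$ with $(\gamma x,\gamma y) \notin W_0$. A uniform embedding is an injective map inducing a uniform isomorphism onto its image. The Hausdorff-Bourbaki uniform structure on the set $\mathcal{P}(X)$ of all subsets of $X$ has as a base the sets $\widehat{V} = \{(A,B) : B \subset V[A] \text{ and } A \subset V[B]\}$, $V$ an entourage of $X$; the Hausdorff-Bourbaki topology is its associated topology. *)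

(* Defs.v *)
From HB Require Import structures.
From mathcomp Require Import all_boot all_order all_algebra.
From mathcomp Require Import all_classical all_reals all_analysis.
Set Implicit Arguments. Unset Strict Implicit. Unset Printing Implicit Defensive.
Local Open Scope classical_set_scope.

Definition is_group (G : Type) (mul : G -> G -> G) (one : G) (inv : G -> G) :=
  [/\ forall a b c, mul a (mul b c) = mul (mul a b) c,
      forall a, mul one a = a, forall a, mul a one = a,
      forall a, mul (inv a) a = one & forall a, mul a (inv a) = one].

Definition is_action (G X : Type) (mul : G -> G -> G) (one : G) (act : G -> X -> X) :=
  (forall x, act one x = x) /\ (forall g h x, act (mul g h) x = act g (act h x)).

Definition unif_continuous_action (G : Type) (X : uniformType) (act : G -> X -> X) :=
  forall g, unif_continuous (act g).

Definition expansive_action (G : Type) (X : uniformType) (act : G -> X -> X) :=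
  exists2 W0 : set (X * X), entourage W0 &
    forall x y : X, x <> y -> exists g : G, ~ W0 (act g x, act g y).

Definition ent_img (X : Type) (V : set (X * X)) (A : set X) : set X :=
  [set x | exists2 a, A a & V (x, a)].

Definition hb_ent (X : Type) (V : set (X * X)) (A B : set X) : Prop :=
  B `<=` ent_img V A /\ A `<=` ent_img V B.

Definition directed (I : Type) (le : I -> I -> Prop) :=
  [/\ (exists i : I, True), (forall i, le i i),
      (forall i j k, le i j -> le j k -> le i k) &
      (forall i j, exists k, le i k /\ le j k)].

(* Convergence of a net of subsets (Z_i) to Y in the Hausdorff-Bourbaki topology:
   for every entourage V of X (the sets hat V form a base of the HB uniformity),
   eventually (Z_i, Y) ∈ hat V. *)
Definition hb_converges (X : uniformType) (I : Type) (le : I -> I -> Prop)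
    (Z : I -> set X) (Y : set X) :=
  forall V : set (X * X), entourage V ->
    exists i0 : I, forall i, le i0 i -> hb_ent V (Z i) Y.

Definition gamma_invariant (G X : Type) (act : G -> X -> X) (A : set X) :=
  forall g x, A x -> A (act g x).

Definition uniform_embedding_on (X : uniformType) (f : X -> X) (Y : set X) :=
  [/\ (forall y y', Y y -> Y y' -> f y = f y' -> y = y'),
      (forall U, entourage U -> exists2 V, entourage V &
         forall y y', Y y -> Y y' -> V (y, y') -> U (f y, f y')) &
      (forall U, entourage U -> exists2 V, entourage V &
         forall y y', Y y -> Y y' -> V (f y, f y') -> U (y, y'))].

Definition surjunctive_on (X : Type) (f : X -> X) (Z : set X) :=
  Z `<=` f @` Z \/ ~ (forall z z', Z z -> Z z' -> f z = f z' -> z = z').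

(* Main.v *)
Require Import Defs.
From HB Require Import structures.
From mathcomp Require Import all_boot all_order all_algebra.
From mathcomp Require Import all_classical all_reals all_analysis.
Local Open Scope classical_set_scope.

Lemma ucP {X : uniformType} {f : X -> X} {U} : unif_continuous f -> entourage U ->
  exists2 V, entourage V & forall a b, V (a, b) -> U (f a, f b).
Proof.
move=> hf eU; exists ((fun xy => (f xy.1, f xy.2)) @^-1` U) => //.
exact: hf.
Qed.

Lemma ent_tri {X : uniformType} {A : set (X * X)} : entourage A ->
  exists2 B, entourage B & (forall x y, B (x, y) -> B (y, x)) /\
    (forall x y z, B (x, y) -> B (y, z) -> A (x, z)).
Proof.
move=> eA; exists (split_ent A `&` ((split_ent A)^-1)%relation).
  exact/entourage_invI/entourage_split_ent.
split; first by move=> x y [h1 h2]; split.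
by move=> x y z [h1 _] [h2 _]; apply: (entourage_split y).
Qed.

Lemma closure_ent {X : uniformType} (A : set X) x :
  (forall U, entourage U -> exists2 a, A a & U (x, a)) -> closure A x.
Proof.
move=> h B /nbhsP; rewrite nbhs_E => -[E eE sE]; have [a Aa Ea] := h E eE.
by exists a; split => //; apply: sE; apply/xsectionP.
Qed.

Lemma closed_ent {X : uniformType} (A : set X) x : closed A ->
  (forall U, entourage U -> exists2 a, A a & U (x, a)) -> A x.
Proof. by move=> cA h; apply: cA; apply: closure_ent. Qed.

Theorem corollary4p2 (X : uniformType) (G : Type)
  (mul : G -> G -> G) (one : G) (inv : G -> G) (act : G -> X -> X)
  (f : X -> X) (Y : set X) (I : Type) (le : I -> I -> Prop) (Z : I -> set X) :
  is_group mul one inv ->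
  is_action mul one act ->
  unif_continuous_action act ->
  expansive_action act ->
  unif_continuous f ->
  (forall g x, f (act g x) = act g (f x)) ->
  closed Y -> closed (f @` Y) ->
  uniform_embedding_on f Y ->
  directed le ->
  (forall i, gamma_invariant act (Z i)) ->
  (forall i, f @` Z i `<=` Z i) ->
  (forall i, surjunctive_on f (Z i)) ->
  hb_converges le Z Y ->
  gamma_invariant act Y /\ f @` Y = Y.
Proof.
move=> _ _ hact [W0 eW0 hexp] hf hfeq cY cfY [_ _ hemb] [_ refl _ _] ginv fZ surj hb.
have stab : forall h : X -> X, unif_continuous h ->
    (forall i x, Z i x -> Z i (h x)) -> forall y, Y y -> Y (h y).
  move=> h hh hZ y Yy; apply: closed_ent => // U eU.
  have [U1 eU1 [sU1 tU1]] := ent_tri eU.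
  have [V1 eV1 hV1] := ucP hh eU1.
  have eV : entourage (V1 `&` U1) by exact: filterI.
  have [i0 hi0] := hb _ eV.
  have [hYZ hZY] := hi0 i0 (refl i0).
  have [z Zz [Vyz _]] := hYZ y Yy.
  have [y' Yy' [_ Uy']] := hZY (h z) (hZ _ _ Zz).
  by exists y' => //; apply: (tU1 _ (h z)) => //; apply: hV1.
split.
  move=> g y Yy; apply: (stab (act g) (hact g)) => //.
  by move=> i x Zx; apply: ginv.
apply/seteqP; split.
  move=> _ [y Yy <-]; apply: (stab f) => // i x Zx; apply: fZ; by exists x.
move=> y Yy; apply: closed_ent => // U eU.
have [W1' eW1' [sW1' tW1']] := ent_tri eW0.
have [W1 eW1 [sW1 tW1]] := ent_tri eW1'.
have [V1 eV1 hV1] := hemb _ eW1.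
have [V2 eV2 [sV2 tV2]] := ent_tri eV1.
have [V3 eV3 hV3] := ucP hf eV2.
have [U1 eU1 [sU1 tU1]] := ent_tri eU.
have [V4 eV4 hV4] := ucP hf eU1.
pose V := V3 `&` W1 `&` (V4 `&` U1).
have eV : entourage V by apply: filterI; apply: filterI.
have [i0 hi0] := hb _ eV.
have [hYZ hZY] := hi0 i0 (refl i0).
case: (surj i0) => [sZ|ninj].
  have [z Zz [_ [_ Uyz]]] := hYZ y Yy.
  have [z' Zz' fz'] := sZ z Zz.
  have [y'' Yy'' [_ [V4z _]]] := hZY z' Zz'.
  exists (f y''); first by exists y''.
  apply: (tU1 _ z) => //; rewrite -fz'; exact: hV4.
exfalso; apply: ninj => z1 z2 Z1 Z2 fz12.
apply: contrapT => neq; have [g hg] := hexp _ _ neq; apply: hg.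
have Zg1 := ginv i0 g _ Z1; have Zg2 := ginv i0 g _ Z2.
have [y1 Y1 [[V31 W11] _]] := hZY _ Zg1.
have [y2 Y2 [[V32 W12] _]] := hZY _ Zg2.
have fe : f (act g z1) = f (act g z2) by rewrite !hfeq fz12.
have Wy : W1 (y1, y2).
  apply: hV1 => //; apply: (tV2 _ (f (act g z1))).
    exact/sV2/hV3.
  by rewrite fe; apply: hV3.
apply: (tW1' _ y2).
  exact: (tW1 _ y1).
by apply: (tW1 _ (act g z2)); [apply: sW1 | apply: entourage_refl].
Qed.
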